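(* Let $-\infty\le\alpha<\beta\le+\infty$ and let $a,b,d,e$ be differentiable real functions on $(\alpha,\beta)$ with $d(x)>0$ and $e(x)>0$ there. Let $h$ be a real function, differentiable on $(\alpha,\beta)$, satisfying the Riccati equation $$h'(x)=d(x)-(b(x)-a(x))h(x)-e(x)h(x)^2,\qquad x\in(\alpha,\beta).$$ If $h(\alpha^+)>0$, then $h(x)>0$ for all $x\in(\alpha,\beta)$.
   Context: $h(\alpha^+)$ denotes the one-sided limit $\lim_{x\to\alpha^+}h(x)$. *)

(* Defs.v *)
From HB Require Import structures.
From mathcomp Require Import all_boot all_order all_algebra.
From mathcomp Require Import all_classical all_reals all_analysis.
Set Implicit Arguments. Unset Strict Implicit. Unset Printing Implicit Defensive.
Import Order.TTheory GRing.Theory Num.Theory.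
Import numFieldNormedType.Exports.
Local Open Scope ring_scope.
Local Open Scope classical_set_scope.
Local Open Scope ereal_scope.

Definition in_open_ext {R : realType} (al be : \bar R) (x : R) : Prop :=
  al < x%:E < be.

Definition right_lim {R : realType} (h : R -> R) (al : \bar R) (l : \bar R)
  : Prop :=
  match al with
  | EFin a => (h x)%:E @[x --> a^'+] --> l
  | -oo => (h x)%:E @[x --> -oo%R] --> l
  | +oo => False
  end.

(* Main.v *)
Require Import Defs.
From HB Require Import structures.
From mathcomp Require Import all_boot all_order all_algebra.
From mathcomp Require Import all_classical all_reals all_analysis.
From mathcomp Require Import lra.
Import Order.TTheory GRing.Theory Num.Theory.
Import numFieldNormedType.Exports.
Local Open Scope ring_scope.

Lemma step1 (R : realType) (al : \bar R) (h : R -> R) (l : \bar R) (x0 : R) :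
  (al < x0%:E)%E -> right_lim h al l -> (0 < l)%E ->
  exists y, [/\ (al < y%:E)%E, y < x0 & 0 < h y].
Proof.
move=> ax0 hl l0.
have Hn := open_ereal_gt' l0.
case: al ax0 hl => [a| |] //= ax0 hl.
- have := hl _ Hn. rewrite /= => /nbhs_ballP [e /= e0 He].
  rewrite lte_fin in ax0.
  set m := Num.min (e / 2) ((x0 - a) / 2).
  have m0 : 0 < m by rewrite lt_min; apply/andP; split; lra.
  have me : m <= e/2 by rewrite /m ge_min lexx.
  have mx : m <= (x0 - a)/2 by rewrite /m ge_min lexx orbT.
  exists (a + m); split.
  + rewrite lte_fin; lra.
  + lra.
  + rewrite -lte_fin; apply: He; last (by lra).
    rewrite /ball /= ltr_norml; apply/andP; split; lra.
- have := hl _ Hn. rewrite /= => -[M [_ HM]].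
  exists (Num.min M x0 - 1); split; first exact: ltNyr.
  + have : Num.min M x0 <= x0 by rewrite ge_min lexx orbT.
    lra.
  + rewrite -lte_fin; apply: HM.
    have : Num.min M x0 <= M by rewrite ge_min lexx.
    lra.
Qed.
Lemma step2 (R : realType) (h : R -> R) (y x0 : R) (P : R -> Prop) :
  (forall t, y <= t <= x0 -> P t) ->
  (forall t, P t -> derivable h t 1) ->
  (forall t, P t -> h t = 0 -> 0 < derive1 h t) ->
  y < x0 -> 0 < h y -> h x0 <= 0 -> False.
Proof.
move=> HP Hd Hpos yx hy hx.
set Z := [set t | y <= t <= x0 /\ h t <= 0]%classic.
have Zx : Z x0 by split => //; rewrite lexx ltW.
have Zne : nonempty Z by exists x0.
have Zlb : lbound Z y by move=> t [/andP[]].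
have hasZ : has_inf Z by split => //; exists y.
set z := inf Z.
have yz : y <= z by apply: lb_le_inf.
have zx : z <= x0 by apply: ge_inf => //; exists y.
have Pz : P z by apply: HP; rewrite yz zx.
have cont : {for z, continuous h}.
  by have /derivable1_diffP/differentiable_continuous := Hd _ Pz.
have left_pos : forall t, y <= t < z -> 0 < h t.
  move=> t /andP[yt tz]; rewrite ltNge; apply/negP => ht.
  have : z <= t by apply: ge_inf => //; [exists y | split => //; rewrite yt (le_trans (ltW tz))].
  by rewrite leNgt tz.
have hz0 : h z <= 0.
  rewrite leNgt; apply/negP => hz.
  have H1 := @cvgr_gt _ _ _ _ _ _ cont _ hz. have [e /= e0 He] := (nbhs_ballP _ _).1 (H1 _).
  have [t Zt tz] := inf_adherent e0 hasZ.
  have zt : z <= t by apply: ge_inf => //; exists y.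
  have : 0 < h t.
    apply: He; rewrite /ball /= ltr_norml; apply/andP; split; lra.
  by case: Zt => _ ht; rewrite ltNge ht.
have yltz : y < z.
  rewrite lt_neqAle yz andbT; apply/eqP => eyz.
  by move: hy; rewrite eyz ltNge hz0.
have hz : h z = 0.
  apply/eqP; rewrite eq_le hz0 /= leNgt; apply/negP => hz.
  have H1 := @cvgr_lt _ _ _ _ _ _ cont _ hz. have [e /= e0 He] := (nbhs_ballP _ _).1 (H1 _).
  set t := Num.max y (z - e / 2).
  have t1 : y <= t by rewrite /t le_max lexx.
  have t2 : z - e/2 <= t by rewrite /t le_max lexx orbT.
  have t3 : t < z by rewrite /t gt_max yltz /=; lra.
  have : h t < 0.
    apply: He; rewrite /ball /= ltr_norml; apply/andP; split; lra.
  by rewrite ltNge ltW // left_pos // t1 t3.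
have dz := Hpos _ Pz hz.
have := Hd _ Pz; move=> /cvg_ex [L HL].
have eL : derive1 h z = L by rewrite derive1E; exact: cvg_lim HL.
rewrite eL in dz.
have H2 := @cvgr_gt _ _ _ _ _ _ HL _ dz.
have [e /= e0 He] := (nbhs_ballP _ _).1 (H2 _).
set t := - Num.min (e / 2) ((z - y) / 2).
have m1 : Num.min (e / 2) ((z - y) / 2) <= e / 2 by rewrite ge_min lexx.
have m2 : Num.min (e / 2) ((z - y) / 2) <= (z - y) / 2 by rewrite ge_min lexx orbT.
have m0 : 0 < Num.min (e / 2) ((z - y) / 2) by rewrite lt_min; apply/andP; split; lra.
have tn : t < 0 by rewrite /t; lra.
have : 0 < t^-1 *: ((h \o shift z) t%:A - h z).
  apply: He; last by rewrite lt_eqF.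
  rewrite /ball /= ltr_norml; apply/andP; split; rewrite /t; lra.
rewrite /= hz subr0 [t%:A]mulr1.
have htz : 0 < h (t + z) by apply: left_pos; apply/andP; split; rewrite /t; lra.
change (0 < t^-1 * h (t + z) -> False).
by rewrite pmulr_lgt0 // invr_gt0 ltNge (ltW tn).
Qed.

Theorem lemma1 (R : realType) (al be : \bar R) (a b d e h : R -> R) (l : \bar R) :
  (al < be)%E ->
  (forall x, in_open_ext al be x ->
     [/\ derivable a x 1, derivable b x 1, derivable d x 1 & derivable e x 1]) ->
  (forall x, in_open_ext al be x -> 0 < d x /\ 0 < e x) ->
  (forall x, in_open_ext al be x -> derivable h x 1) ->
  (forall x, in_open_ext al be x ->
     derive1 h x = d x - (b x - a x) * h x - e x * (h x) ^+ 2) ->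
  right_lim h al l -> (0 < l)%E ->
  forall x, in_open_ext al be x -> 0 < h x.
Proof.
move=> _ _ Hde Hh Hric hl l0 x Hx.
rewrite ltNge; apply/negP => hx.
have /andP[ax xb] := Hx.
have [y [ay yx hy]] := @step1 R al h l x ax hl l0.
apply: (@step2 R h y x (in_open_ext al be)) yx hy hx.
- move=> t /andP[yt tx]; apply/andP; split.
  + by apply: (lt_le_trans ay); rewrite lee_fin.
  + by apply: (le_lt_trans _ xb); rewrite lee_fin.
- exact: Hh.
- move=> t Pt ht; rewrite Hric // ht mulr0 subr0 expr0n /= mulr0 subr0.
  by case: (Hde t Pt).
Qed.
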